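(* Let $\mathcal{X}\subseteq\mathbb{R}^d$ be a closed convex set, let $T\ge 1$, let $(\eta_t)_{t\in[T-1]}$ be positive step sizes, and let $(f_t)_{t\in[T-1]}$ and $(f'_t)_{t\in[T-1]}$ be convex $L$-Lipschitz functions on $\mathcal{X}$. For each $t$ and $x$, let $\nabla f_t(x)$ and $\nabla f'_t(x)$ denote fixed (arbitrary) choices of subgradients of $f_t$ and $f'_t$ at $x$. Let $(x^t)_{t\in[T]}$ and $(y^t)_{t\in[T]}$ be defined by $x^1=y^1\in\mathcal{X}$ and, for all $t\in[T-1]$, $$x^{t+1}=\mathsf{Proj}_{\mathcal{X}}[x^t-\eta_t\nabla f_t(x^t)],\qquad y^{t+1}=\mathsf{Proj}_{\mathcal{X}}[y^t-\eta_t\nabla f'_t(y^t)].$$ Suppose that for every $t\in[T-1]$, $\|\nabla f_t(x^t)-\nabla f'_t(x^t)\|\le a_t$ for scalars $0\le a_t\le 2L$. Let $t_0=\inf\{t: f_t\neq f'_t\}$. Then $$\|x^T-y^T\|\le 2L\sqrt{\sum_{t=t_0}^{T-1}\eta_t^2}+2\sum_{t=t_0+1}^{T-1}\eta_t a_t .$$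
   Context: $\|\cdot\|$ is the Euclidean norm and $\mathsf{Proj}_{\mathcal{X}}$ is Euclidean projection onto $\mathcal{X}$. The functions are assumed $L$-Lipschitz on an open set containing $\mathcal{X}$, so all subgradients have norm at most $L$. Empty sums are $0$. *)

(* Defs.v *)
From HB Require Import structures.
From mathcomp Require Import all_boot all_order all_algebra.
From mathcomp Require Import all_classical all_reals topology normedtype.
Set Implicit Arguments. Unset Strict Implicit. Unset Printing Implicit Defensive.
Import Order.TTheory GRing.Theory Num.Theory.
Import numFieldNormedType.Exports.
Local Open Scope classical_set_scope.
Local Open Scope ring_scope.

Definition dotv (R : realType) (d : nat) (u v : 'rV[R]_d) : R :=
  \sum_(i < d) u ord0 i * v ord0 i.

Definition enorm (R : realType) (d : nat) (u : 'rV[R]_d) : R :=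
  Num.sqrt (dotv u u).

Definition convex_set (R : realType) (d : nat) (X : set 'rV[R]_d) : Prop :=
  forall x y (l : R), X x -> X y -> 0 <= l <= 1 -> X (l *: x + (1 - l) *: y).

Definition convex_fun_on (R : realType) (d : nat) (U : set 'rV[R]_d)
  (f : 'rV[R]_d -> R) : Prop :=
  forall x y (l : R), U x -> U y -> 0 <= l <= 1 ->
    f (l *: x + (1 - l) *: y) <= l * f x + (1 - l) * f y.

Definition lipschitz_on (R : realType) (d : nat) (U : set 'rV[R]_d)
  (L : R) (f : 'rV[R]_d -> R) : Prop :=
  forall x y, U x -> U y -> `|f x - f y| <= L * enorm (x - y).

Definition is_subgrad (R : realType) (d : nat) (U : set 'rV[R]_d)
  (f : 'rV[R]_d -> R) (x g : 'rV[R]_d) : Prop :=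
  forall y, U y -> f x + dotv g (y - x) <= f y.

Definition admissible (R : realType) (d : nat) (X : set 'rV[R]_d) (L : R)
  (sg : ('rV[R]_d -> R) -> 'rV[R]_d -> 'rV[R]_d) (f : 'rV[R]_d -> R) : Prop :=
  exists U : set 'rV[R]_d, open U /\ convex_set U /\ X `<=` U /\
    convex_fun_on U f /\ lipschitz_on U L f /\
    (forall x, X x -> is_subgrad U f x (sg f x)).

(* Euclidean projection onto X (a nearest point of X to z, chosen classically;
   unique when X is nonempty closed convex). *)
Definition Proj (R : realType) (d : nat) (X : set 'rV[R]_d) (z : 'rV[R]_d)
  : 'rV[R]_d :=
  xget 0 [set p | X p /\ forall q, X q -> enorm (z - p) <= enorm (z - q)].

(* t0 = inf { t in [T-1] : f t <> f' t }, with the empty infimum encoded as T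
   (both sums in the bound are then empty, as with t0 = +oo). *)
Definition first_change_index (R : realType) (d : nat) (T : nat)
  (f f' : nat -> 'rV[R]_d -> R) (t0 : nat) : Prop :=
  (forall t, (1 <= t < t0)%N -> f t = f' t) /\
  (((1 <= t0)%N /\ (t0 < T)%N /\ f t0 <> f' t0) \/ t0 = T).

(* Main.v *)
Require Import Defs.
From HB Require Import structures.
From mathcomp Require Import all_boot all_order all_algebra.
From mathcomp Require Import all_classical all_reals topology normedtype.
From mathcomp Require Import derive.
From mathcomp Require Import ring lra zify.
Import Order.TTheory GRing.Theory Num.Theory.
Import numFieldNormedType.Exports.
Local Open Scope classical_set_scope.
Local Open Scope ring_scope.
Set Implicit Arguments.

Section Dot.
Context {R : realType} {d : nat}.
Implicit Types u v w : 'rV[R]_d.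

Lemma dotvC u v : dotv u v = dotv v u.
Proof. by apply: eq_bigr => i _; rewrite mulrC. Qed.

Lemma dotvDl u v w : dotv (u + v) w = dotv u w + dotv v w.
Proof. by rewrite /dotv -big_split; apply: eq_bigr => i _; rewrite mxE mulrDl. Qed.

Lemma dotvNl u w : dotv (- u) w = - dotv u w.
Proof. by rewrite /dotv -sumrN; apply: eq_bigr => i _; rewrite mxE mulNr. Qed.

Lemma dotvZl (l : R) u w : dotv (l *: u) w = l * dotv u w.
Proof. by rewrite /dotv mulr_sumr; apply: eq_bigr => i _; rewrite mxE mulrA. Qed.

Lemma dotvBl u v w : dotv (u - v) w = dotv u w - dotv v w.
Proof. by rewrite dotvDl dotvNl. Qed.

Lemma dotvDr u v w : dotv w (u + v) = dotv w u + dotv w v.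
Proof. by rewrite dotvC dotvDl !(dotvC w). Qed.
Lemma dotvNr u w : dotv w (- u) = - dotv w u.
Proof. by rewrite dotvC dotvNl dotvC. Qed.
Lemma dotvBr u v w : dotv w (u - v) = dotv w u - dotv w v.
Proof. by rewrite dotvDr dotvNr. Qed.
Lemma dotvZr (l : R) u w : dotv w (l *: u) = l * dotv w u.
Proof. by rewrite dotvC dotvZl dotvC. Qed.

Lemma dotv_ge0 u : 0 <= dotv u u.
Proof. by apply: sumr_ge0 => i _; rewrite -expr2 sqr_ge0. Qed.

Lemma dotv_eq0 u : dotv u u = 0 -> u = 0.
Proof.
move=> h; have h' : \sum_(j < d) u ord0 j ^+ 2 = 0.
  by rewrite -[RHS]h; apply: eq_bigr => j _; rewrite expr2.
apply/rowP => i; rewrite mxE.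
have := psumr_eq0P (fun j _ => sqr_ge0 (u ord0 j)) h' (isT : predT i).
by move=> h2; apply/eqP; rewrite -sqrf_eq0 h2.
Qed.

Lemma enorm_ge0 u : 0 <= enorm u.
Proof. exact: sqrtr_ge0. Qed.

Lemma enorm_sq u : enorm u ^+ 2 = dotv u u.
Proof. by rewrite /enorm sqr_sqrtr // dotv_ge0. Qed.

Lemma CS2 u v : dotv u v ^+ 2 <= dotv u u * dotv v v.
Proof.
have [vv0|vvn0] := eqVneq (dotv v v) 0.
  by rewrite vv0 mulr0 (dotv_eq0 vv0) /dotv big1 ?expr0n // => i _; rewrite mxE mulr0.
have vvp : 0 < dotv v v by rewrite lt_def vvn0 dotv_ge0.
have := dotv_ge0 (dotv v v *: u - dotv u v *: v).
rewrite !(dotvBl, dotvBr, dotvZl, dotvZr) (dotvC v u).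
move=> h.
have : 0 <= dotv v v * (dotv v v * dotv u u - dotv u v ^+ 2) by lra.
by rewrite pmulr_rge0 // subr_ge0 mulrC.
Qed.

Lemma CS u v : dotv u v <= enorm u * enorm v.
Proof.
have [h|h] := leP (dotv u v) 0.
  by apply: le_trans h _; rewrite mulr_ge0 ?enorm_ge0.
rewrite -(ger0_norm (ltW h)) -sqrtr_sqr /enorm -sqrtrM ?dotv_ge0 //.
by rewrite ler_sqrt ?CS2 // mulr_ge0 ?dotv_ge0.
Qed.

Lemma CSn u v : - dotv u v <= enorm u * enorm v.
Proof.
rewrite -dotvNr; apply: le_trans (CS _ _) _.
by rewrite /enorm dotvNl dotvNr opprK.
Qed.

End Dot.
Section Proj.
Context {R : realType} {d : nat}.
Implicit Types u v w z : 'rV[R]_d.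

Lemma enormN u : enorm (- u) = enorm u.
Proof. by rewrite /enorm dotvNl dotvNr opprK. Qed.

Lemma coord_le_enorm u i : `|u ord0 i| <= enorm u.
Proof.
rewrite -sqrtr_sqr /enorm ler_sqrt ?dotv_ge0 // /dotv (bigD1 i) //= -expr2.
by rewrite lerDl sumr_ge0 // => j _; rewrite -expr2 sqr_ge0.
Qed.

Lemma mxnorm_le_enorm u : `|u| <= enorm u.
Proof.
rewrite [leLHS]/Num.norm /= mx_normrE; apply: bigmax_le; first exact: enorm_ge0.
by move=> [i j] _ /=; rewrite (ord1 i) coord_le_enorm.
Qed.

Lemma continuous_sum (T : topologicalType) (I : Type) (s : seq I)
  (F : I -> T -> R) : (forall i, continuous (F i)) ->
  continuous (fun x => \sum_(i <- s) F i x).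
Proof.
move=> hF; elim: s => [|i s IH].
  under eq_fun do rewrite big_nil; exact: cst_continuous.
under eq_fun do rewrite big_cons.
by move=> x; apply: continuousD; [exact: hF | exact: IH].
Qed.

Lemma n2_continuous z : continuous (fun q : 'rV[R]_d => dotv (z - q) (z - q)).
Proof.
rewrite /dotv; apply: continuous_sum => i x.
have h : continuous (fun q : 'rV[R]_d => (z - q) ord0 i).
  under eq_fun do rewrite !mxE.
  move=> y; apply: continuousB; first exact: cst_continuous.
  exact: (@coord_continuous _ 1 d ord0 i).
exact: continuousM (h x) (h x).
Qed.

End Proj.
Section Proj2.
Context {R : realType} {d : nat}.
Implicit Types u v w z : 'rV[R]_d.

Lemma proj_exists (X : set 'rV[R]_d) z p0 : closed X -> X p0 ->
  exists p, X p /\ forall q, X q -> enorm (z - p) <= enorm (z - q).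
Proof.
move=> cX Xp0.
pose n2 := fun q : 'rV[R]_d => dotv (z - q) (z - q).
pose K := X `&` (n2 @^-1` [set r | r <= n2 p0]).
have cK : closed K.
  apply: closedI => //; apply: preimage_closed; last exact: closed_le.
  by move=> q _; apply: n2_continuous.
have bK : bounded_set K.
  exists (`|z| + enorm (z - p0)); split; first exact: num_real.
  move=> M hM q [Xq Kq].
  suff H : `|q| <= `|z| + enorm (z - p0).
    exact: (@le_trans _ R _ _ _ H (ltW hM)).
  have -> : q = z - (z - q) by rewrite opprB addrC subrK.
  apply: (le_trans (ler_normB z (z - q))); apply: lerD => //.
  apply: le_trans (mxnorm_le_enorm _) _.
  by rewrite /enorm ler_sqrt ?dotv_ge0.
have compK := bounded_closed_compact bK cK.
have [c cK' cmin] := compact_EVT_min (ex_intro _ p0 (conj Xp0 (lexx _)) : K !=set0)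
   compK (continuous_subspaceT (@n2_continuous _ _ z)).
rewrite inE in cK'; case: cK' => Xc _.
exists c; split => // q Xq; rewrite /enorm ler_sqrt ?dotv_ge0 //.
have [hq|hq] := leP (n2 q) (n2 p0).
  by apply: cmin; rewrite inE.
apply: le_trans (ltW hq); apply: cmin; rewrite inE; split => //; exact/lexx.
Qed.

Lemma ProjP (X : set 'rV[R]_d) z p0 : closed X -> X p0 ->
  X (Proj X z) /\ forall q, X q -> enorm (z - Proj X z) <= enorm (z - q).
Proof. move=> cX Xp0; exact: (xgetPex 0 (proj_exists z p0 cX Xp0)). Qed.

End Proj2.
Section Proj3.
Context {R : realType} {d : nat}.
Implicit Types u v w z : 'rV[R]_d.

Lemma enorm_le_sq u v : enorm u <= enorm v -> dotv u u <= dotv v v.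
Proof. by rewrite /enorm ler_sqrt ?dotv_ge0. Qed.

Lemma proj_vi (X : set 'rV[R]_d) z p : convex_set X -> X p ->
  (forall q, X q -> enorm (z - p) <= enorm (z - q)) ->
  forall q, X q -> dotv (z - p) (q - p) <= 0.
Proof.
move=> cvX Xp pmin q Xq.
set c := dotv (z - p) (q - p); set n := dotv (q - p) (q - p).
have n0 : 0 <= n by exact: dotv_ge0.
rewrite leNgt; apply/negP => c0.
set l := c / (n + c).
have nc0 : 0 < n + c by lra.
have l0 : 0 < l by rewrite divr_gt0.
have lnc : l * (n + c) = c by rewrite /l mulfVK // gt_eqF.
have l1 : l <= 1 by rewrite /l ler_pdivrMr // mul1r; lra.
have Xr := cvX q p l Xq Xp (introT andP (conj (ltW l0) l1)).
have := pmin _ Xr; move/enorm_le_sq.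
have -> : z - (l *: q + (1 - l) *: p) = (z - p) - l *: (q - p).
  by apply/rowP => i; rewrite !mxE; ring.
have -> : dotv (z - p - l *: (q - p)) (z - p - l *: (q - p)) =
   dotv (z - p) (z - p) - 2 * l * c + l ^+ 2 * n.
  rewrite /c /n /dotv mulr_sumr mulr_sumr -sumrB -big_split /=.
  by apply: eq_bigr => i _; rewrite !mxE; ring.
move=> h.
have : l * (2 * c) <= l * (l * n) by lra.
rewrite ler_pM2l // => h2.
nra.
Qed.

Lemma proj_nonexp (X : set 'rV[R]_d) p0 z w : closed X -> convex_set X -> X p0 ->
  enorm (Proj X z - Proj X w) <= enorm (z - w).
Proof.
move=> cX cvX Xp0.
have [Xp pm] := ProjP z p0 cX Xp0; have [Xq qm] := ProjP w p0 cX Xp0.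
set p := Proj X z in Xp pm *; set q := Proj X w in Xq qm *.
have h1 := @proj_vi X z p cvX Xp pm q Xq.
have h2 := @proj_vi X w q cvX Xq qm p Xp.
have e : dotv (z - p) (q - p) + dotv (w - q) (p - q) =
   dotv (p - q) (p - q) - dotv (z - w) (p - q).
  rewrite /dotv -!sumrB -big_split /=; apply: eq_bigr => i _; rewrite !mxE; ring.
have h3 : dotv (p - q) (p - q) <= enorm (z - w) * enorm (p - q).
  by apply: le_trans (CS _ _); lra.
rewrite -enorm_sq in h3.
have := enorm_ge0 (p - q); have := enorm_ge0 (z - w).
nra.
Qed.

End Proj3.
Section Subgrad.
Context {R : realType} {d : nat}.
Implicit Types u v w z : 'rV[R]_d.

Lemma enormZ (l : R) u : enorm (l *: u) = `|l| * enorm u.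
Proof.
by rewrite /enorm dotvZl dotvZr mulrA -expr2 sqrtrM ?sqr_ge0 // sqrtr_sqr.
Qed.

Lemma subgrad_bound (X : set 'rV[R]_d) L sg f x : 0 <= L ->
  admissible X L sg f -> X x -> enorm (sg f x) <= L.
Proof.
move=> L0 [U [oU [cU [XU [cvf [lip sgh]]]]]] Xx.
set g := sg f x.
have Ux := XU _ Xx.
have /nbhs_ballP [e e0 hball] : nbhs x U by apply: open_nbhs_nbhs; split.
set eps := e / (2 * (`|g| + 1)).
have gp : 0 < `|g| + 1 by rewrite ltr_wpDl.
have eps0 : 0 < eps by rewrite divr_gt0 // mulr_gt0.
set y := x + eps *: g.
have yx : y - x = eps *: g by rewrite /y addrAC subrr add0r.
have By : ball x e y.
  rewrite -ball_normE /ball_ /= /y opprD addrA subrr add0r normrN normrZ gtr0_norm //.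
  rewrite /eps mulrAC ltr_pdivrMr ?mulr_gt0 //.
  rewrite ltr_pM2l //. lra.
have Uy := hball _ By.
have h1 := sgh x Xx y Uy.
have h2 := lip y x Uy Ux.
rewrite yx dotvZr in h1; rewrite yx enormZ (gtr0_norm eps0) in h2.
rewrite -enorm_sq -/g in h1.
have h3 : eps * enorm g ^+ 2 <= eps * (L * enorm g).
  have := ler_norm (f y - f x); rewrite mulrCA in h2; lra.
rewrite ler_pM2l // in h3.
have := enorm_ge0 g; nra.
Qed.

End Subgrad.
Lemma sq_le {R : realType} (a b : R) : 0 <= b -> a ^+ 2 <= b ^+ 2 -> a <= b.
Proof. move=> b0 h; rewrite leNgt; apply/negP => ab; nra. Qed.

Lemma enorm0 {R : realType} {d : nat} : enorm (0 : 'rV[R]_d) = 0.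
Proof.
by rewrite /enorm /dotv big1 ?sqrtr0 // => i _; rewrite mxE mul0r.
Qed.

Lemma gg_aux {R : realType} (A B L c : R) : 0 <= A -> 0 <= B -> A <= L -> B <= L ->
  - c <= A * B -> A ^+ 2 + B ^+ 2 - 2 * c <= 4 * L ^+ 2.
Proof. move=> *; nra. Qed.

Lemma E_aux {R : realType} (du G H N eta a dl L : R) : 0 < eta -> 0 <= H ->
  - G <= a * dl -> N <= 4 * L ^+ 2 ->
  du - 2 * eta * G - 2 * eta * H + eta ^+ 2 * N <=
  du + 2 * eta * a * dl + 4 * L ^+ 2 * eta ^+ 2.
Proof.
move=> e0 H0 hG hN.
have h1 : eta * (- G) <= eta * (a * dl) by rewrite ler_pM2l.
have h2 : eta ^+ 2 * N <= eta ^+ 2 * (4 * L ^+ 2) by rewrite ler_pM2l // exprn_gt0.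
have h3 : 0 <= eta * H by rewrite mulr_ge0 // ltW.
lra.
Qed.

Lemma inv_aux {R : realType} (dl dl' S C eta a L : R) : 0 <= dl -> 0 <= L ->
  0 <= S -> 0 <= C -> 0 < eta -> 0 <= a ->
  dl <= 2 * L * Num.sqrt S + 2 * C ->
  dl' ^+ 2 <= dl ^+ 2 + 2 * eta * a * dl + 4 * L ^+ 2 * eta ^+ 2 ->
  dl' <= 2 * L * Num.sqrt (S + eta ^+ 2) + 2 * (C + eta * a).
Proof.
move=> d0 L0 S0 C0 e0 a0 hd hd'.
set B := 2 * L * Num.sqrt S; set B' := 2 * L * Num.sqrt (S + eta ^+ 2).
set w := eta * a; set Cc := 2 * C.
rewrite -/B -/Cc in hd.
have w0 : 0 <= w by rewrite mulr_ge0 // ltW.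
have B0 : 0 <= B by rewrite mulr_ge0 ?sqrtr_ge0 // mulr_ge0.
have BB : B <= B' by rewrite ler_wpM2l ?mulr_ge0 // ler_sqrt ?addr_ge0 ?sqr_ge0 // lerDl sqr_ge0.
have B'2 : B' ^+ 2 = B ^+ 2 + 4 * L ^+ 2 * eta ^+ 2.
  rewrite /B /B' !exprMn !sqr_sqrtr ?addr_ge0 ?sqr_ge0 //; ring.
have Cc0 : 0 <= Cc by rewrite mulr_ge0.
have h1 : 0 <= (B + Cc - dl) * (B + Cc + dl) by apply: mulr_ge0; lra.
have h2 : 0 <= w * (B + Cc - dl) by apply: mulr_ge0; lra.
have h3 : 0 <= Cc * (B' - B) by rewrite mulr_ge0 // subr_ge0.
have h4 : 0 <= w * B by rewrite mulr_ge0.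
have h5 : 0 <= w * B' by rewrite mulr_ge0 //; lra.
have h6 : 0 <= w * Cc by rewrite mulr_ge0.
have h7 : 0 <= w * w by rewrite mulr_ge0.
have -> : 2 * (C + eta * a) = Cc + 2 * w by rewrite /Cc /w; ring.
apply: sq_le; first lra.
have e1 : 2 * eta * a * dl = 2 * w * dl by rewrite /w; ring.
rewrite e1 in hd'.
nra.
Qed.

Theorem lemma3p1 (R : realType) (d : nat) (X : set 'rV[R]_d) (T : nat)
  (L : R) (eta a : nat -> R) (f f' : nat -> 'rV[R]_d -> R)
  (sg : ('rV[R]_d -> R) -> 'rV[R]_d -> 'rV[R]_d)
  (x y : nat -> 'rV[R]_d) (t0 : nat) :
  closed X -> convex_set X -> (1 <= T)%N ->
  (forall t, (1 <= t < T)%N -> 0 < eta t) ->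
  (forall t, (1 <= t < T)%N -> admissible X L sg (f t)) ->
  (forall t, (1 <= t < T)%N -> admissible X L sg (f' t)) ->
  X (x 1%N) -> y 1%N = x 1%N ->
  (forall t, (1 <= t < T)%N ->
     x t.+1 = Proj X (x t - eta t *: sg (f t) (x t))) ->
  (forall t, (1 <= t < T)%N ->
     y t.+1 = Proj X (y t - eta t *: sg (f' t) (y t))) ->
  (forall t, (1 <= t < T)%N ->
     enorm (sg (f t) (x t) - sg (f' t) (x t)) <= a t /\ 0 <= a t <= 2 * L) ->
  first_change_index T f f' t0 ->
  enorm (x T - y T) <=
    2 * L * Num.sqrt (\sum_(t0 <= t < T) eta t ^+ 2)
    + 2 * \sum_(t0.+1 <= t < T) eta t * a t.
Proof.
move=> cX cvX T1 etap admf admf' Xx1 y1 xrec yrec ha [fc hc].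
have Xx : forall t, (1 <= t <= T)%N -> X (x t).
  elim=> [//|t IH] /andP[_ tT].
  case: t IH tT => [_ _|t IH tT]; first exact: Xx1.
  rewrite xrec ?tT //; exact: (ProjP _ _ cX Xx1).1.
have Xy : forall t, (1 <= t <= T)%N -> X (y t).
  elim=> [//|t IH] /andP[_ tT].
  case: t IH tT => [_ _|t IH tT]; first by rewrite y1.
  rewrite yrec ?tT //; exact: (ProjP _ _ cX Xx1).1.
have t0T : (t0 <= T)%N by case: hc => [[_ [/ltnW]]|->].
have eqA : forall t, (1 <= t)%N -> (t <= t0)%N -> x t = y t.
  elim=> [//|t IH] _ tt0.
  case: t IH tt0 => [_ _|t IH tt0]; first by rewrite y1.
  have tT : (1 <= t.+1 < T)%N by apply/andP; split => //; apply: leq_trans tt0 t0T.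
  have ft : f t.+1 = f' t.+1 by apply: fc; rewrite tt0.
  by rewrite (xrec _ tT) (yrec _ tT) (IH isT (ltnW tt0)) ft.
case: hc => [[t01 [t0T' ft0]]|t0E]; last first.
  subst t0; rewrite eqA // subrr enorm0 !big_geq // sqrtr0.
  by rewrite !mulr0 addr0.
have L0 : 0 <= L.
  have [_ /andP[h1 h2]] := ha t0 (introT andP (conj t01 t0T')).
  by have := le_trans h1 h2; rewrite pmulr_rge0.
have step : forall t, (1 <= t < T)%N ->
    enorm (x t.+1 - y t.+1) ^+ 2 <=
    enorm (x t - y t) ^+ 2 + 2 * eta t * a t * enorm (x t - y t)
    + 4 * L ^+ 2 * eta t ^+ 2.
  move=> t tT.
  have /andP[t1 tT'] := tT.
  have Xxt : X (x t) by apply: Xx; rewrite t1 ltnW.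
  have Xyt : X (y t) by apply: Xy; rewrite t1 ltnW.
  set g := sg (f t) (x t); set h := sg (f' t) (x t); set g' := sg (f' t) (y t).
  set u := x t - y t.
  have hne := @proj_nonexp R d X (x 1%N) (x t - eta t *: g) (y t - eta t *: g') cX cvX Xx1.
  rewrite -(xrec _ tT) -(yrec _ tT) in hne.
  have e : dotv ((x t - eta t *: g) - (y t - eta t *: g'))
                ((x t - eta t *: g) - (y t - eta t *: g')) =
     dotv u u - 2 * eta t * dotv u (g - h) - 2 * eta t * dotv u (h - g')
     + eta t ^+ 2 * dotv (g - g') (g - g').
    rewrite /u /dotv !mulr_sumr -!sumrB -!big_split /=.
    by apply: eq_bigr => i _; rewrite !mxE; ring.
  have mono : 0 <= dotv u (h - g').
    have [U [_ [_ [XU [_ [_ sgh]]]]]] := admf' t tT.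
    have s1 := sgh _ Xxt _ (XU _ Xyt).
    have s2 := sgh _ Xyt _ (XU _ Xxt).
    have e2 : dotv u (h - g') = - (dotv h (y t - x t) + dotv g' (x t - y t)).
      rewrite /u /dotv -big_split -sumrN /=.
      by apply: eq_bigr => i _; rewrite !mxE; ring.
    rewrite e2; lra.
  have [hat _] := ha t tT.
  have cs1 := CSn u (g - h).
  have ng : enorm g <= L by apply: subgrad_bound L0 (admf t tT) Xxt.
  have ng' : enorm g' <= L by apply: subgrad_bound L0 (admf' t tT) Xyt.
  have cs2 := CSn g g'.
  have e3 : dotv (g - g') (g - g') = enorm g ^+ 2 + enorm g' ^+ 2 - 2 * dotv g g'.
    rewrite !enorm_sq /dotv !mulr_sumr -big_split -sumrB /=.
    by apply: eq_bigr => i _; rewrite !mxE; ring.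
  have gg : dotv (g - g') (g - g') <= 4 * L ^+ 2.
    by rewrite e3; apply: gg_aux => //; apply: enorm_ge0.
  have etat := etap t tT.
  have hu := enorm_ge0 u.
  have hG := enorm_ge0 (g - h).
  have E : dotv ((x t - eta t *: g) - (y t - eta t *: g'))
                ((x t - eta t *: g) - (y t - eta t *: g')) <=
     enorm u ^+ 2 + 2 * eta t * a t * enorm u + 4 * L ^+ 2 * eta t ^+ 2.
    rewrite e enorm_sq.
    apply: E_aux => //.
    apply: le_trans cs1 _; rewrite mulrC; apply: ler_wpM2r => //.
  apply: le_trans E.
  rewrite -enorm_sq; apply: lerXn2r; rewrite ?nnegrE ?enorm_ge0 //.
pose S t := \sum_(t0 <= s < t) eta s ^+ 2.
pose A t := \sum_(t0.+1 <= s < t) eta s * a s.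
have inv : forall k, (t0 + k <= T)%N ->
    enorm (x (t0 + k)%N - y (t0 + k)%N) <= 2 * L * Num.sqrt (S (t0 + k)%N) + 2 * A (t0 + k)%N.
  elim=> [_|k IH hk].
    rewrite addn0 eqA // subrr enorm0 /S /A !big_geq // sqrtr0.
    by rewrite !mulr0 addr0.
  have tT : (1 <= t0 + k < T)%N.
    by apply/andP; split; [apply: leq_trans t01 (leq_addr _ _) | rewrite -addnS].
  have hst := step _ tT.
  rewrite addnS /S big_nat_recr ?leq_addr //=.
  case: k IH hk tT hst => [|k] IH hk tT hst.
    rewrite addn0 in hst tT *.
    rewrite (eqA t0) // subrr enorm0 in hst.
    rewrite /A big_geq // big_geq // add0r mulr0 addr0 sqrtr_sqr gtr0_norm ?etap //.
    apply: sq_le; first by rewrite !mulr_ge0 // ltW ?etap.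
    move: hst; rewrite !expr0n /= !mulr0 !add0r => hst.
    by apply: le_trans hst _; rewrite !exprMn; lra.
  have [hat /andP[a0 _]] := ha _ tT.
  rewrite /A big_nat_recr /=; last by rewrite addnS ltnS leq_addr.
  apply: inv_aux hst.
  - exact: enorm_ge0.
  - exact: L0.
  - by apply: sumr_ge0 => i _; apply: sqr_ge0.
  - rewrite big_nat_cond; apply: sumr_ge0 => i /andP[/andP[hi1 hi2] _]; apply: mulr_ge0.
      apply: ltW; apply: etap; move: tT hi1 hi2 t01; clear; lia.
    have [_ /andP[h _]] := ha i ltac:(move: tT hi1 hi2 t01; clear; lia).
    exact: h.
  - exact: etap.
  - exact: a0.
  - apply: IH; move: hk; clear; lia.
have := inv (T - t0)%N; rewrite subnKC //; apply; exact: leqnn.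
Qed.
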